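(* Fix $\beta\neq0$. For each of the algorithms RSVI2 and RSQ2 and any fixed $\delta\in(0,1]$, with probability at least $1-\delta/2$, $$\mathcal{R}(K)\lesssim\sum_{k=1}^K\sum_{h=1}^H\Delta_h(s_h^k,a_h^k;\tau^k_{h-1})+\frac{e^{|\beta|H}-1}{|\beta|}H\log(\log K/\delta).$$
   Context: Episodic finite-horizon tabular MDP with $|\mathcal{S}|=S$, $|\mathcal{A}|=A$, horizon $H$, $K$ episodes, transitions $\mathcal{P}_h(\cdot\mid s,a)$, deterministic rewards $r_h\in[0,1]$, fixed initial state $s_1$. For policy $\pi=(\pi_h)$ and $\beta\ne0$: $V_h^\pi(s)=\frac1\beta\log\mathbb{E}[e^{\beta\sum_{i=h}^H r_i(s_i,\pi_i(s_i))}\mid s_h=s]$, $Q_h^\pi(s,a)$ likewise with $a_h=a$; $V^*_h=\sup_\pi V^\pi_h$ attained by $\pi^*$, $Q^*_h=Q^{\pi^*}_h$. $\pi^k$ is the (greedy) policy the algorithm executes in episode $k$, $\tau^k=((s_h^k,a_h^k))_{h\in[H]}$ is the sampled trajectory of episode $k$, $\tau^k_{h-1}$ its first $h-1$ pairs. Regret $\mathcal{R}(K)=\sum_k(V_1^*-V_1^{\pi^k})(s_1)$. For $\tau_{h-1}=((s_j,a_j))_{j<h}$, $R(\tau_{h-1})=\sum_{j<h}r_j(s_j,a_j)$ (zero if $h=1$), and the cascaded gap is $\Delta_h(s,a;\tau_{h-1})=\psi_\beta e^{\beta R(\tau_{h-1})}[e^{\beta V^*_h(s)}-e^{\beta Q^*_h(s,a)}]$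 with $\psi_\beta=1/\beta$ for $\beta>0$, $e^{-\beta H}/\beta$ for $\beta<0$. $\lesssim$ hides universal constants. RSVI2 (inputs $K,\delta,\beta$): initialize $Q_h,V_h\leftarrow H-h+1$, $w_h,N_h\leftarrow0$ for $h\in[H+1]$; in episode $k$, for $h=H,\dots,1$ and $(s,a)$ with $N_h(s,a)\ge1$: $w_h(s,a)=\frac{1}{N_h(s,a)}\sum_{i<k}\mathbb{1}\{(s_h^i,a_h^i)=(s,a)\}e^{\beta[r_h(s,a)+V_{h+1}(s^i_{h+1})]}$, $b_h=c|e^{\beta(H-h+1)}-1|\sqrt{S\log(2SAHK/\delta)/N_h(s,a)}$, $G_h=\min\{e^{\beta(H-h+1)},w_h+b_h\}$ ($\beta>0$) or $\max\{e^{\beta(H-h+1)},w_h-b_h\}$ ($\beta<0$), $Q_h=\frac1\beta\log G_h$, $V_h(s)=\max_{a'}Q_h(s,a')$; then act $a_h=\arg\max_aQ_h(s_h,a)$, $h=1..H$, incrementing $N_h(s_h,a_h)$. RSQ2 (inputs $K,\delta,\beta$): initialize $Q_h,V_h\leftarrow H-h+1$ ($\beta>0$) or $0$ ($\beta<0$), $V_{H+1}\equiv0$, $N_h\leftarrow0$, $\alpha_t=\frac{H+1}{H+t}$, $G_h=e^{\beta Q_h}$; each episode for $h=1..H$: act $a_h=\arg\max Q_h(s_h,\cdot)$, observe $r_h,s_{h+1}$, $t=N_h(s_h,a_h)\leftarrow N_h(s_h,a_h)+1$, $w=(1-\alpha_t)G_h(s_h,a_h)+\alpha_te^{\beta[r_h(s_h,a_h)+V_{h+1}(s_{h+1})]}$,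 $b_{h,t}=c|e^{\beta(H-h+1)}-1|\sqrt{H\log(2SAHK/\delta)/t}$, $G_h(s_h,a_h)=\min\{e^{\beta(H-h+1)},w+\alpha_tb_{h,t}\}$ ($\beta>0$) or $\max\{e^{\beta(H-h+1)},w-\alpha_tb_{h,t}\}$ ($\beta<0$), $Q_h=\frac1\beta\log G_h$, $V_h(s_h)=\max Q_h(s_h,\cdot)$. Here $c>0$ is an appropriate universal constant. *)

(* Defs.v *)
From HB Require Import structures.
From mathcomp Require Import all_boot all_order all_algebra.
From mathcomp Require Import all_classical all_reals all_analysis.
Set Implicit Arguments. Unset Strict Implicit. Unset Printing Implicit Defensive.
Import Order.TTheory GRing.Theory Num.Theory.
Local Open Scope ring_scope.

(* Conventions:
   - steps are 1-based: h = 1..H; V_{H+1} = 0;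
   - a (deterministic, Markov) policy is  pi : nat -> S -> A, pi h s = action;
   - a trajectory of one episode is  tau : nat -> S * A, tau h = (s_h, a_h);
   - an algorithm maps the list of past trajectories [tau^1; ...; tau^(k-1)]
     to the greedy policy pi^k it executes in episode k. *)

Section RiskSensitiveRL.
Variables (R : realType) (S A : finType).
Variables (s1 : S) (a0 : A) (H K : nat).
Variables (P : nat -> S -> A -> S -> R) (r : nat -> S -> A -> R).
Variables (beta delta c : R).

Definition policy := nat -> S -> A.
Definition traj := nat -> (S * A)%type.
Definition Alg := seq traj -> policy.

Definition Bexp (h : nat) (s : S) (a : A) (f : S -> R) : R :=
  expR (beta * r h s a) * \sum_(s' : S) P h s a s' * f s'.

(* Wpi pi m s = E[ e^{beta sum_{i=h}^H r_i} | s_h = s ] for h = H + 1 - m *)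
Fixpoint Wpi (pi : policy) (m : nat) : S -> R :=
  match m with
  | 0 => fun _ => 1
  | m'.+1 => fun s => let h := (H - m')%N in Bexp h s (pi h s) (Wpi pi m')
  end.

Definition Vpi (pi : policy) (h : nat) (s : S) : R :=
  beta^-1 * ln (Wpi pi (H.+1 - h) s).

Definition Qpi (pi : policy) (h : nat) (s : S) (a : A) : R :=
  beta^-1 * ln (Bexp h s a (Wpi pi (H - h))).

Definition Vstar (h : nat) (s : S) : R :=
  sup [set x | exists pi : policy, x = Vpi pi h s].

(* Q*_h = Q^{pi*}_h, unfolded using V^{pi*}_{h+1} = V*_{h+1} *)
Definition Qstar (h : nat) (s : S) (a : A) : R :=
  beta^-1 * ln (Bexp h s a (fun s' => expR (beta * Vstar h.+1 s'))).

Definition psi_beta : R :=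
  if 0 < beta then beta^-1 else expR (- beta * H%:R) / beta.

Definition cumrew (tau : traj) (h : nat) : R :=
  \sum_(1 <= j < h) r j (tau j).1 (tau j).2.

(* cascaded gap Delta_h(s,a;tau_{h-1}), with Rprev = R(tau_{h-1}) *)
Definition cgap (h : nat) (s : S) (a : A) (Rprev : R) : R :=
  psi_beta * expR (beta * Rprev) *
    (expR (beta * Vstar h s) - expR (beta * Qstar h s a)).

Definition argmaxA (f : A -> R) : A :=
  odflt a0 [pick a | f a == \big[Num.max/f a0]_(b : A) f b].

Definition greedy (Q : nat -> S -> A -> R) : policy :=
  fun h s => argmaxA (Q h s).

Definition logterm : R :=
  ln ((2 * #|S| * #|A| * H * K)%N%:R / delta).

Definition topG (h : nat) : R := expR (beta * (H.+1 - h)%N%:R).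

Definition cnt (D : seq traj) (h : nat) (s : S) (a : A) : nat :=
  count (fun tau : traj => tau h == (s, a)) D.

Definition vi_Qstep (D : seq traj) (Vn : S -> R) (h : nat) (s : S) (a : A) : R :=
  let N := cnt D h s a in
  if N == 0%N then (H.+1 - h)%N%:R else
  let w := N%:R^-1 *
      \sum_(tau <- D | tau h == (s, a)) expR (beta * (r h s a + Vn (tau h.+1).1)) in
  let b := c * `|topG h - 1| * Num.sqrt (#|S|%:R * logterm / N%:R) in
  let G := if 0 < beta then Num.min (topG h) (w + b)
           else Num.max (topG h) (w - b) in
  beta^-1 * ln G.

(* vi_V D m = V_h for h = H + 1 - m (so vi_V D 0 = V_{H+1} = 0) *)
Fixpoint vi_V (D : seq traj) (m : nat) : S -> R :=
  match m with
  | 0 => fun _ => 0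
  | m'.+1 => fun s => let h := (H - m')%N in
      \big[Num.max/vi_Qstep D (vi_V D m') h s a0]_(a : A) vi_Qstep D (vi_V D m') h s a
  end.

Definition vi_Q (D : seq traj) (h : nat) (s : S) (a : A) : R :=
  vi_Qstep D (vi_V D (H - h)) h s a.

Definition RSVI2 : Alg := fun D => greedy (vi_Q D).

Record qstate := QSt {
  qG : nat -> S -> A -> R;
  qN : nat -> S -> A -> nat;
  qV : nat -> S -> R }.

Definition Qinit (h : nat) : R := if 0 < beta then (H.+1 - h)%N%:R else 0.

Definition q_init : qstate :=
  QSt (fun h _ _ => expR (beta * Qinit h)) (fun _ _ _ => 0%N) (fun h _ => Qinit h).

Definition alpha (t : nat) : R := (H.+1)%:R / (H + t)%N%:R.

Definition q_step (tau : traj) (st : qstate) (h : nat) : qstate :=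
  let s := (tau h).1 in let a := (tau h).2 in
  let t := (qN st h s a).+1 in
  let al := alpha t in
  let w := (1 - al) * qG st h s a
           + al * expR (beta * (r h s a + qV st h.+1 (tau h.+1).1)) in
  let b := c * `|topG h - 1| * Num.sqrt (H%:R * logterm / t%:R) in
  let g := if 0 < beta then Num.min (topG h) (w + al * b)
           else Num.max (topG h) (w - al * b) in
  let G' := fun h' s' a' =>
    if [&& h' == h, s' == s & a' == a] then g else qG st h' s' a' in
  let N' := fun h' s' a' =>
    if [&& h' == h, s' == s & a' == a] then t else qN st h' s' a' in
  let V' := fun h' s' =>
    if (h' == h) && (s' == s) then
      \big[Num.max/beta^-1 * ln (G' h s a0)]_(a' : A) (beta^-1 * ln (G' h s a'))
    else qV st h' s' in
  QSt G' N' V'.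

Definition q_episode (st : qstate) (tau : traj) : qstate :=
  foldl (q_step tau) st (iota 1 H).

Definition q_state (D : seq traj) : qstate := foldl q_episode q_init D.

Definition RSQ2 : Alg :=
  fun D => greedy (fun h s a => beta^-1 * ln (qG (q_state D) h s a)).

(* outcome: the visited states s_h^k, k < K (0-based episode), h-1 < H *)
Definition Omega := {ffun 'I_K -> {ffun 'I_H -> S}}.

(* state s_h in (0-based) episode k, h 1-based *)
Definition stateAt (w : Omega) (k h : nat) : S :=
  match (insub k : option 'I_K) with
  | Some i => match (insub h.-1 : option 'I_H) with
              | Some j => w i j | None => s1 end
  | None => s1
  end.

Definition mktraj (pi : policy) (st : nat -> S) : traj :=
  fun h => (st h, pi h (st h)).

Fixpoint hist (alg : Alg) (w : Omega) (k : nat) : seq traj :=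
  match k with
  | 0 => [::]
  | k'.+1 => rcons (hist alg w k') (mktraj (alg (hist alg w k')) (stateAt w k'))
  end.

(* policy executed in (0-based) episode k, and its trajectory *)
Definition polk (alg : Alg) (w : Omega) (k : nat) : policy := alg (hist alg w k).
Definition trajk (alg : Alg) (w : Omega) (k : nat) : traj :=
  mktraj (polk alg w k) (stateAt w k).

Definition weight (alg : Alg) (w : Omega) : R :=
  \prod_(k < K)
    ((stateAt w k 1 == s1)%:R *
     \prod_(1 <= h < H)
        P h (stateAt w k h) (polk alg w k h (stateAt w k h)) (stateAt w k h.+1)).

Definition prob (alg : Alg) (E : pred Omega) : R := \sum_(w | E w) weight alg w.

Definition regret (alg : Alg) (w : Omega) : R :=
  \sum_(k < K) (Vstar 1 s1 - Vpi (polk alg w k) 1 s1).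

Definition gapsum (alg : Alg) (w : Omega) : R :=
  \sum_(k < K) \sum_(1 <= h < H.+1)
     cgap h (trajk alg w k h).1 (trajk alg w k h).2 (cumrew (trajk alg w k) h).

Definition bound_whp (alg : Alg) (C : R) : Prop :=
  prob alg [pred w | regret alg w <=
     C * (gapsum alg w
          + (expR (`|beta| * H%:R) - 1) / `|beta| * H%:R * ln (ln K%:R / delta))]
  >= 1 - delta / 2.

End RiskSensitiveRL.

(* Main.v *)
Require Import Defs.
From HB Require Import structures.
From mathcomp Require Import all_boot all_order all_algebra.
From mathcomp Require Import all_classical all_reals all_analysis.
From mathcomp Require Import ring lra zify.
Set Implicit Arguments. Unset Strict Implicit. Unset Printing Implicit Defensive.
Import Order.TTheory GRing.Theory Num.Theory.
Local Open Scope ring_scope.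

Section Ana.
Variables (R : realType) (beta : R).
Hypothesis hb : beta != 0.

Lemma invlnexp x : beta^-1 * ln (expR (beta * x)) = x.
Proof. by rewrite expRK mulrA mulVf // mul1r. Qed.

Lemma expinvln u : 0 < u -> expR (beta * (beta^-1 * ln u)) = u.
Proof. by move=> u0; rewrite mulrA mulfV // mul1r lnK. Qed.

Lemma expR_ge1' (z : R) : 0 <= z -> 1 <= expR z.
Proof. by move=> z0; have := expR_ge1Dx z; lra. Qed.

Definition sg : R := if 0 < beta then 1 else -1.

Lemma sg_exp_mono x y : x <= y -> sg * expR (beta * x) <= sg * expR (beta * y).
Proof.
rewrite /sg; case: ifP => bp xy.
  by rewrite !mul1r ler_expR ler_pM2l.
rewrite !mulN1r lerN2 ler_expR.
have bn : beta < 0 by rewrite lt_neqAle hb /= leNgt bp.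
by rewrite ler_nM2l.
Qed.

Lemma invln_mono a b : 0 < a -> 0 < b -> sg * a <= sg * b ->
  beta^-1 * ln a <= beta^-1 * ln b.
Proof.
rewrite /sg; case: ifP => bp a0 b0.
  by rewrite !mul1r => ab; rewrite ler_pM2l ?invr_gt0 // ler_ln.
rewrite !mulN1r lerN2 => ba.
have bn : beta < 0 by rewrite lt_neqAle hb /= leNgt bp.
by rewrite ler_nM2l ?invr_lt0 // ler_ln.
Qed.

Definition psi (H : nat) := psi_beta H beta.

Lemma absb : `|beta| = if 0 < beta then beta else - beta.
Proof.
case: ifP => bp; first by rewrite gtr0_norm.
have bn : beta < 0 by rewrite lt_neqAle hb /= leNgt bp.
by rewrite ltr0_norm.
Qed.

Lemma psi_nonneg H x y : y <= x -> 0 <= psi H * (expR (beta * x) - expR (beta * y)).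
Proof.
rewrite /psi /psi_beta; case: ifP => bp yx.
  apply: mulr_ge0; first by rewrite invr_ge0 ltW.
  by rewrite subr_ge0 ler_expR ler_pM2l.
have bn : beta < 0 by rewrite lt_neqAle hb /= leNgt bp.
apply: mulr_le0.
  by rewrite pmulr_rle0 ?expR_gt0 // invr_le0 ltW.
by rewrite subr_le0 ler_expR ler_nM2l.
Qed.

Lemma psi_conv (H : nat) x y : 0 <= y -> y <= x -> x <= H%:R ->
  x - y <= psi H * (expR (beta * x) - expR (beta * y)).
Proof.
move=> y0 yx xH.
have e1 := expR_ge1Dx (beta * (x - y)).
have e2 := expR_ge1Dx (- beta * (x - y)).
rewrite /psi /psi_beta; case: ifP => bp.
  have -> : expR (beta * x) - expR (beta * y) = expR (beta * y) * (expR (beta * (x - y)) - 1).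
    by rewrite mulrBr mulr1 -expRD; congr (expR _ - _); rewrite mulrBr addrC subrK.
  have ey : 1 <= expR (beta * y) by rewrite -expR0 ler_expR mulr_ge0 // ltW.
  rewrite ler_pdivlMl //.
  have z0 : 0 <= expR (beta * (x - y)) - 1.
    by rewrite subr_ge0 -expR0 ler_expR mulr_ge0 // ?subr_ge0 // ltW.
  apply: (le_trans _ (ler_wpM2r z0 ey)).
  by rewrite mul1r; lra.
have bn : beta < 0 by rewrite lt_neqAle hb /= leNgt bp.
have -> : expR (- beta * H%:R) / beta * (expR (beta * x) - expR (beta * y))
   = (expR (- beta * (H%:R - x))) * ((expR (- beta * (x - y)) - 1) / - beta).
  have E1 : expR (- beta * (H%:R - x)) = expR (- beta * H%:R) * expR (beta * x).
    by rewrite -expRD; congr expR; ring.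
  have E2 : expR (- beta * (x - y)) = expR (beta * y) / expR (beta * x).
    by rewrite -expRN -expRD; congr expR; ring.
  rewrite E1 E2; field.
  by rewrite hb gt_eqF ?expR_gt0.
have eH : 1 <= expR (- beta * (H%:R - x)).
  apply: expR_ge1'; apply: mulr_ge0; last by rewrite subr_ge0.
  by rewrite oppr_ge0 ltW.
have q : x - y <= (expR (- beta * (x - y)) - 1) / - beta.
  by rewrite ler_pdivlMr ?oppr_gt0 //; lra.
apply: (le_trans q); rewrite -[X in X <= _]mul1r ler_wpM2r //.
by apply: le_trans q; rewrite subr_ge0.
Qed.

Lemma psi_bnd (H : nat) x y : 0 <= x <= H%:R -> 0 <= y <= H%:R ->
  psi H * (expR (beta * x) - expR (beta * y)) <= (expR (`|beta| * H%:R) - 1) / `|beta|.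
Proof.
move=> /andP[x0 xH] /andP[y0 yH].
rewrite /psi /psi_beta absb; case: ifP => bp.
  rewrite mulrC ler_pM2r ?invr_gt0 //.
  apply: lerB; first by rewrite ler_expR ler_pM2l.
  by rewrite -expR0 ler_expR mulr_ge0 // ltW.
have bn : beta < 0 by rewrite lt_neqAle hb /= leNgt bp.
have -> : expR (- beta * H%:R) / beta * (expR (beta * x) - expR (beta * y))
   = (expR (- beta * H%:R) * (expR (beta * y) - expR (beta * x))) / - beta.
  by field.
rewrite ler_pM2r ?invr_gt0 ?oppr_gt0 //.
rewrite mulrBr -!expRD.
apply: lerB.
  by rewrite ler_expR; nra.
by apply: expR_ge1'; nra.
Qed.

End Ana.


Section DP.
Variables (R : realType) (S A : finType) (a0 : A) (H : nat).
Variables (P : nat -> S -> A -> S -> R) (r : nat -> S -> A -> R) (beta : R).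
Hypothesis hP0 : forall h s a s', (1 <= h <= H)%N -> 0 <= P h s a s'.
Hypothesis hP1 : forall h s a, (1 <= h <= H)%N -> \sum_(s' : S) P h s a s' = 1.
Hypothesis hr : forall h s a, (1 <= h <= H)%N -> 0 <= r h s a <= 1.
Hypothesis hb : beta != 0.

Definition Esum h s a (f : S -> R) := \sum_(s' : S) P h s a s' * expR (beta * f s').
Definition ce h s a (f : S -> R) := beta^-1 * ln (Esum h s a f).

Lemma Esum_pos h s a f : (1 <= h <= H)%N -> 0 < Esum h s a f.
Proof.
move=> hh; rewrite lt_neqAle; apply/andP; split; last first.
  by apply: sumr_ge0 => s' _; rewrite mulr_ge0 ?hP0 // ltW ?expR_gt0.
apply/negP => /eqP/esym/eqP; rewrite psumr_eq0; last first.
  by move=> s' _; rewrite mulr_ge0 ?hP0 // ltW ?expR_gt0.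
move=> /allP H0.
have : \sum_(s' : S) P h s a s' = 0.
  apply: big1 => s' _; have := H0 s' (mem_index_enum _).
  by rewrite /= mulf_eq0 (gt_eqF (expR_gt0 _)) orbF => /eqP.
by rewrite hP1 // => /eqP; rewrite oner_eq0.
Qed.

Lemma Bexp_exp h s a f : (1 <= h <= H)%N ->
  Bexp P r beta h s a (fun s' => expR (beta * f s')) = expR (beta * (r h s a + ce h s a f)).
Proof.
move=> hh; rewrite /Bexp mulrDr expRD; congr (_ * _).
by rewrite /ce expinvln // Esum_pos.
Qed.

Lemma ce_mono h s a f g : (1 <= h <= H)%N -> (forall s', f s' <= g s') ->
  ce h s a f <= ce h s a g.
Proof.
move=> hh fg; apply: invln_mono => //; try exact: Esum_pos.
rewrite /Esum !mulr_sumr; apply: ler_sum => s' _.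
rewrite !(mulrCA (@sg _ beta)) ler_wpM2l ?hP0 //.
exact: sg_exp_mono.
Qed.

Lemma ce_const h s a c : (1 <= h <= H)%N -> ce h s a (fun _ => c) = c.
Proof.
move=> hh; rewrite /ce /Esum -mulr_suml hP1 // mul1r.
exact: invlnexp.
Qed.

Lemma step_bnd h s a (f : S -> R) (m : nat) : (1 <= h <= H)%N ->
  (forall s', 0 <= f s' <= m%:R) -> 0 <= r h s a + ce h s a f <= m.+1%:R.
Proof.
move=> hh fb.
have l : ce h s a (fun _ => 0) <= ce h s a f.
  by apply: ce_mono => // s'; case/andP: (fb s').
have u : ce h s a f <= ce h s a (fun _ => m%:R).
  by apply: ce_mono => // s'; case/andP: (fb s').
rewrite ce_const // in l; rewrite ce_const // in u.
have := @hr h s a hh; rewrite -natr1; lra.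
Qed.

Fixpoint X (pi : policy S A) (m : nat) : S -> R :=
  match m with
  | 0 => fun _ => 0
  | m'.+1 => fun s => let h := (H - m')%N in r h s (pi h s) + ce h s (pi h s) (X pi m')
  end.

Lemma X_bnd pi m s : (m <= H)%N -> 0 <= X pi m s <= m%:R.
Proof.
elim: m s => [|m IH] s mH /=; first by rewrite lexx.
apply: step_bnd; first by apply/andP; split; rewrite ?subn_gt0 ?leq_subr.
by move=> s'; apply: IH; apply: ltnW.
Qed.

Lemma Wpi_X pi m : (m <= H)%N -> Wpi H P r beta pi m = fun s => expR (beta * X pi m s).
Proof.
elim: m => [|m IH] mH /=; first by apply: funext => s; rewrite mulr0 expR0.
apply: funext => s; rewrite IH ?(ltnW mH) // Bexp_exp //.
by apply/andP; split; rewrite ?subn_gt0 ?leq_subr.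
Qed.

Lemma Vpi_X pi h s : (1 <= h <= H.+1)%N -> Vpi H P r beta pi h s = X pi (H.+1 - h) s.
Proof.
case/andP=> h1 hH; rewrite /Vpi Wpi_X ?invlnexp //.
by rewrite leq_subLR -addn1 addnC leq_add2r.
Qed.

Definition qopt (V : S -> R) h s a := r h s a + ce h s a V.

Fixpoint Vopt (m : nat) : S -> R :=
  match m with
  | 0 => fun _ => 0
  | m'.+1 => fun s => let h := (H - m')%N in
      qopt (Vopt m') h s [arg max_(a > a0) qopt (Vopt m') h s a]%O
  end.

Definition pistar : policy S A :=
  fun h s => [arg max_(a > a0) qopt (Vopt (H - h)) h s a]%O.

Lemma Vopt_ge m s a : qopt (Vopt m) (H - m) s a <= Vopt m.+1 s.
Proof.
rewrite /=; case: arg_maxP => // b _; exact.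
Qed.

Lemma Vopt_bnd m s : (m <= H)%N -> 0 <= Vopt m s <= m%:R.
Proof.
elim: m s => [|m IH] s mH /=; first by rewrite lexx.
apply: step_bnd; first by apply/andP; split; rewrite ?subn_gt0 ?leq_subr.
by move=> s'; apply: IH; apply: ltnW.
Qed.

Lemma X_le_Vopt pi m s : (m <= H)%N -> X pi m s <= Vopt m s.
Proof.
elim: m s => [|m IH] s mH //=.
have hh : (1 <= H - m <= H)%N by apply/andP; split; rewrite ?subn_gt0 ?leq_subr.
apply: le_trans (Vopt_ge m s (pi (H - m)%N s)).
rewrite /qopt lerD2l; apply: ce_mono => // s'; apply: IH; exact: ltnW.
Qed.

Lemma X_pistar m s : (m <= H)%N -> X pistar m s = Vopt m s.
Proof.
elim: m s => [|m IH] s mH //=.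
have e : (H - (H - m) = m)%N by rewrite subKn // ltnW.
rewrite /pistar e.
have -> : X pistar m = Vopt m by apply: funext => s'; rewrite IH // ltnW.
by [].
Qed.

Lemma Vstar_opt h s : (1 <= h <= H.+1)%N -> Vstar H P r beta h s = Vopt (H.+1 - h) s.
Proof.
move=> hh.
have mH : (H.+1 - h <= H)%N by case/andP: hh => h1 _; rewrite leq_subLR -addn1 addnC leq_add2r.
rewrite /Vstar; apply/le_anti/andP; split.
  apply: ge_sup; first by exists (Vpi H P r beta pistar h s), pistar.
  by move=> x [pi ->]; rewrite Vpi_X // X_le_Vopt.
apply: ub_le_sup.
  exists (Vopt (H.+1 - h) s) => x [pi ->]; by rewrite Vpi_X // X_le_Vopt.
by exists pistar; rewrite Vpi_X // X_pistar.
Qed.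

Lemma Qstar_opt h s a : (1 <= h <= H)%N ->
  Qstar H P r beta h s a = qopt (Vopt (H - h)) h s a.
Proof.
move=> hh; rewrite /Qstar.
have -> : (fun s' => expR (beta * Vstar H P r beta h.+1 s')) =
          (fun s' => expR (beta * Vopt (H - h) s')).
  apply: funext => s'; rewrite Vstar_opt ?subSS //.
  by rewrite /= ltnS; case/andP: hh.
by rewrite Bexp_exp // invlnexp.
Qed.

Lemma Vstar_ge_Qstar h s a : (1 <= h <= H)%N ->
  Qstar H P r beta h s a <= Vstar H P r beta h s.
Proof.
move=> hh; rewrite Qstar_opt // Vstar_opt; last first.
  by case/andP: hh => -> hH; rewrite (leq_trans hH).
have e : (H.+1 - h = (H - h).+1)%N by rewrite subSn //; case/andP: hh.
rewrite e; have := Vopt_ge (H - h) s a.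
by rewrite subKn //; case/andP: hh.
Qed.

End DP.


Section Kernel.
Variables (R : realType) (T : finType) (d : T).

Definition ext n (x : {ffun 'I_n -> T}) : nat -> T :=
  fun k => match (insub k : option 'I_n) with Some i => x i | None => d end.

Definition upd (g : nat -> T) (n : nat) (y : T) : nat -> T :=
  fun k => if k == n then y else g k.

Definition joinf n (x : {ffun 'I_n -> T}) (y : T) : {ffun 'I_n.+1 -> T} :=
  [ffun i : 'I_n.+1 => match (insub (val i) : option 'I_n) with Some j => x j | None => y end].

Definition splitf n (w : {ffun 'I_n.+1 -> T}) : {ffun 'I_n -> T} * T :=
  ([ffun j : 'I_n => w (widen_ord (leqnSn n) j)], w ord_max).

Lemma ext_join n x y : ext (@joinf n x y) = upd (ext x) n y.
Proof.
apply: funext => k; rewrite /ext /upd.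
case: insubP => [i ki ik|]; last first.
  rewrite -leqNgt => nk; case: eqP => [kn|_]; first by move: nk; rewrite kn ltnn.
  case: insubP => // j; rewrite ltnNge (ltnW nk) //.
rewrite ffunE ik; case: insubP => [j kj jk|].
  by case: eqP => // kn; move: kj; rewrite kn ltnn.
rewrite -leqNgt => nk; have -> : k == n by rewrite eqn_leq nk -ltnS ki.
by [].
Qed.

Lemma sum_split n (F : {ffun 'I_n.+1 -> T} -> R) :
  \sum_(w : {ffun 'I_n.+1 -> T}) F w = \sum_(x : {ffun 'I_n -> T}) \sum_(y : T) F (joinf x y).
Proof.
rewrite pair_big /=.
rewrite (reindex (fun p : {ffun 'I_n -> T} * T => joinf p.1 p.2)) //=.
apply: onW_bij; exists (@splitf n).
  case=> x y; rewrite /splitf /=; congr pair.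
    apply/ffunP => j; rewrite !ffunE /=; case: insubP => [j' _ jj|].
      by move/val_inj: jj => ->.
    by rewrite ltn_ord.
  rewrite ffunE; case: insubP => // j; by rewrite /= ltnn.
move=> w; apply/ffunP => i; rewrite /splitf !ffunE /=.
case: insubP => [j _ ji|]; first by rewrite ffunE; congr (w _); apply: val_inj.
rewrite -leqNgt => ni; congr (w _); apply: val_inj => /=.
by apply/eqP; rewrite eqn_leq ni -ltnS ltn_ord.
Qed.

Lemma kernel_le (F : nat -> (nat -> T) -> R) :
  (forall k g, 0 <= F k g) ->
  (forall k g g', (forall j, (j <= k)%N -> g j = g' j) -> F k g = F k g') ->
  (forall k g, \sum_(y : T) F k (upd g k y) <= 1) ->
  forall n, \sum_(x : {ffun 'I_n -> T}) \prod_(k < n) F k (ext x) <= 1.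
Proof.
move=> F0 Floc Fsum; elim=> [|n IH].
  rewrite (eq_bigr (fun _ => 1)); last by move=> x _; rewrite big_ord0.
  by rewrite sumr_const card_ffun card_ord expn0.
rewrite sum_split.
apply: le_trans IH; apply: ler_sum => x _.
rewrite (eq_bigr (fun y => (\prod_(k < n) F k (ext x)) * F n (upd (ext x) n y))); last first.
  move=> y _; rewrite ext_join big_ord_recr /=; congr (_ * _).
  apply: eq_bigr => k _; apply: Floc => j jk; rewrite /upd.
  by case: eqP => // jn; move: jk; rewrite jn leqNgt ltn_ord.
rewrite -mulr_sumr -[X in _ <= X]mulr1 ler_wpM2l //.
by apply: prodr_ge0 => k _.
Qed.

Lemma kernel_eq (F : nat -> (nat -> T) -> R) :
  (forall k g g', (forall j, (j <= k)%N -> g j = g' j) -> F k g = F k g') ->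
  (forall k g, \sum_(y : T) F k (upd g k y) = 1) ->
  forall n, \sum_(x : {ffun 'I_n -> T}) \prod_(k < n) F k (ext x) = 1.
Proof.
move=> Floc Fsum; elim=> [|n IH].
  rewrite (eq_bigr (fun _ => 1)); last by move=> x _; rewrite big_ord0.
  by rewrite sumr_const card_ffun card_ord expn0.
rewrite sum_split -[RHS]IH; apply: eq_bigr => x _.
rewrite (eq_bigr (fun y => (\prod_(k < n) F k (ext x)) * F n (upd (ext x) n y))); last first.
  move=> y _; rewrite ext_join big_ord_recr /=; congr (_ * _).
  apply: eq_bigr => k _; apply: Floc => j jk; rewrite /upd.
  by case: eqP => // jn; move: jk; rewrite jn leqNgt ltn_ord.
by rewrite -mulr_sumr Fsum mulr1.
Qed.

End Kernel.


Section Path.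
Variables (R : realType) (S A : finType) (s1 : S) (H : nat).
Variables (P : nat -> S -> A -> S -> R) (r : nat -> S -> A -> R) (beta : R).
Hypothesis hP0 : forall h s a s', (1 <= h <= H)%N -> 0 <= P h s a s'.
Hypothesis hP1 : forall h s a, (1 <= h <= H)%N -> \sum_(s' : S) P h s a s' = 1.
Variable pi : policy S A.

Definition pathst (g : nat -> S) : nat -> S := fun h => g h.-1.

Definition pw (n : nat) (st : nat -> S) : R :=
  (st 1%N == s1)%:R * \prod_(1 <= j < n) P j (st j) (pi j (st j)) (st j.+1).

Definition cr (st : nat -> S) (h : nat) : R := cumrew r (mktraj pi st) h.

Definition M (n : nat) (g : S -> R) : S -> R := fun s => Bexp P r beta n s (pi n s) g.

Fixpoint OpT (n : nat) (g : S -> R) : S -> R :=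
  match n with 0 => g | n'.+1 => OpT n' (M n'.+1 g) end.

Lemma cr_ext st st' h : (forall j, (1 <= j < h)%N -> st j = st' j) -> cr st h = cr st' h.
Proof.
move=> E; rewrite /cr /cumrew; apply: eq_big_nat => j jh /=; by rewrite E.
Qed.

Lemma crS st n : (1 <= n)%N -> cr st n.+1 = cr st n + r n (st n) (pi n (st n)).
Proof. by move=> n1; rewrite /cr /cumrew big_nat_recr. Qed.

Lemma pw_ext st st' n : (forall j, (1 <= j <= n)%N -> st j = st' j) -> (1 <= n)%N ->
  pw n st = pw n st'.
Proof.
move=> E n1; rewrite /pw E ?n1 //; congr (_ * _).
apply: eq_big_nat => j /andP[j1 jn]; rewrite !E ?j1 ?(ltnW jn) //.
Qed.

Lemma pwS st n : (1 <= n)%N ->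
  pw n.+1 st = pw n st * P n (st n) (pi n (st n)) (st n.+1).
Proof. by move=> n1; rewrite /pw big_nat_recr // mulrA. Qed.

Lemma pw_ge0 st n : (n <= H)%N -> 0 <= pw n st.
Proof.
move=> nH; rewrite /pw mulr_ge0 // big_nat_cond; apply: prodr_ge0 => j /andP[/andP[j1 jn] _].
by apply: hP0; rewrite j1 /= ltnW // (leq_trans jn nH).
Qed.

Notation stx x := (pathst (ext s1 x)).

Lemma upd_same n (x : {ffun 'I_n -> S}) y j : (1 <= j <= n)%N ->
  pathst (upd (ext s1 x) n y) j = stx x j.
Proof.
case/andP=> j1 jn; rewrite /pathst /upd; case: eqP => // e.
by move: jn; rewrite -(prednK j1) e ltnn.
Qed.

Lemma upd_new n (x : {ffun 'I_n -> S}) y : pathst (upd (ext s1 x) n y) n.+1 = y.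
Proof. by rewrite /pathst /upd eqxx. Qed.


Lemma path_mass n : (n <= H)%N -> \sum_(x : {ffun 'I_n -> S}) pw n (stx x) = 1.
Proof.
elim: n => [|n IH] nH.
  rewrite (eq_bigr (fun _ => 1)).
  rewrite sumr_const card_ffun card_ord expn0.
  by [].
  move=> x _. rewrite /pw big_geq // mulr1 /pathst /ext.
  by case: insubP => [[]|]; rewrite ?eqxx.
rewrite sum_split. case: (posnP n) => [n0|n1].
  subst n. rewrite (eq_bigr (fun _ => 1)). by rewrite sumr_const card_ffun card_ord expn0.
  move=> x _.
  have E : forall y, pw 1 (pathst (ext s1 (joinf x y))) = (y == s1)%:R.
    move=> y. rewrite ext_join. rewrite /pw big_geq //. rewrite mulr1 upd_new. done.
  under eq_bigr => y _ do rewrite E.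
  rewrite (bigD1 s1) // big1 /=. by rewrite eqxx addr0.
  by move=> y ys; rewrite (negbTE ys).
rewrite -(IH (ltnW nH)). apply: eq_bigr => x _.
have E : forall y, pw n.+1 (pathst (upd (ext s1 x) n y)) =
    pw n (stx x) * P n (stx x n) (pi n (stx x n)) y.
  move=> y. rewrite pwS //. rewrite upd_new. rewrite upd_same ?n1 ?leqnn //.
  congr (_ * _). apply: pw_ext => // j jn. exact: upd_same.
under eq_bigr => y _ do rewrite ext_join E.
by rewrite -mulr_sumr hP1 ?mulr1 // n1 ltnW.
Qed.
End Path.


Section Path2.
Variables (R : realType) (S A : finType) (s1 : S) (H : nat).
Variables (P : nat -> S -> A -> S -> R) (r : nat -> S -> A -> R) (beta : R).
Hypothesis hP0 : forall h s a s', (1 <= h <= H)%N -> 0 <= P h s a s'.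
Hypothesis hP1 : forall h s a, (1 <= h <= H)%N -> \sum_(s' : S) P h s a s' = 1.
Variable pi : policy S A.

Notation stx x := (pathst (ext s1 x)).
Notation pw := (pw s1 P pi).
Notation cr := (cr r pi).

Lemma path_claim n : (n <= H)%N -> forall h (g : S -> R), (1 <= h <= n)%N ->
  \sum_(x : {ffun 'I_n -> S}) pw n (stx x) * expR (beta * cr (stx x) h) * g (stx x h)
  = OpT P r beta pi h.-1 g s1.
Proof.
elim: n => [|n IH] nH h g hh; first by case/andP: hh => h1; rewrite leqNgt h1.
rewrite sum_split.
case/andP: hh => h1; rewrite leq_eqVlt ltnS => /orP[/eqP hn|hn]; last first.
  have n1 : (1 <= n)%N := leq_trans h1 hn.
  rewrite -(IH (ltnW nH) h g); last by rewrite h1.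
  apply: eq_bigr => x _.
  have E : forall y, pw n.+1 (pathst (ext s1 (joinf x y))) *
      expR (beta * cr (pathst (ext s1 (joinf x y))) h) * g (pathst (ext s1 (joinf x y)) h)
    = (pw n (stx x) * expR (beta * cr (stx x) h) * g (stx x h)) *
      P n (stx x n) (pi n (stx x n)) y.
    move=> y; rewrite ext_join pwS // upd_new upd_same ?n1 ?leqnn //.
    rewrite (@pw_ext _ _ _ _ _ _ _ (stx x)) //; last by move=> j jn; exact: upd_same.
    rewrite (@cr_ext _ _ _ _ _ _ (stx x)); last first.
      by move=> j /andP[j1 jh]; rewrite upd_same // j1 (leq_trans (ltnW jh)).
    rewrite upd_same ?h1 ?hn //; ring.
  under eq_bigr => y _ do rewrite E.
  by rewrite -mulr_sumr hP1 ?mulr1 // n1 ltnW.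
subst h; case: (posnP n) => [n0|n1].
  subst n; rewrite (eq_bigr (fun _ => g s1)).
    by rewrite sumr_const card_ffun card_ord expn0.
  move=> x _.
  have E : forall y, pw 1 (pathst (ext s1 (joinf x y))) *
      expR (beta * cr (pathst (ext s1 (joinf x y))) 1) * g (pathst (ext s1 (joinf x y)) 1)
      = (y == s1)%:R * g y.
    move=> y; rewrite ext_join /pw /pw /cr /cr /cumrew !big_geq //.
    by rewrite mulr0 expR0 !mulr1 upd_new.
  under eq_bigr => y _ do rewrite E.
  rewrite (bigD1 s1) // big1 /=; first by rewrite eqxx mul1r addr0.
  by move=> y ys; rewrite (negbTE ys) mul0r.
rewrite -(prednK n1) /= (prednK n1).
rewrite -(IH (ltnW nH) n (M P r beta pi n g)); last by rewrite n1 leqnn.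
apply: eq_bigr => x _.
have E : forall y, pw n.+1 (pathst (ext s1 (joinf x y))) *
    expR (beta * cr (pathst (ext s1 (joinf x y))) n.+1) * g (pathst (ext s1 (joinf x y)) n.+1)
  = (pw n (stx x) * expR (beta * cr (stx x) n)) *
    (expR (beta * r n (stx x n) (pi n (stx x n))) * (P n (stx x n) (pi n (stx x n)) y * g y)).
  move=> y; rewrite ext_join pwS // upd_new upd_same ?n1 ?leqnn //.
  rewrite (@pw_ext _ _ _ _ _ _ _ (stx x)) //; last by move=> j jn; exact: upd_same.
  rewrite crS // (@cr_ext _ _ _ _ _ _ (stx x)); last first.
    by move=> j /andP[j1 jh]; rewrite upd_same // j1 ltnW.
  rewrite upd_same ?n1 ?leqnn // mulrDr expRD; ring.
under eq_bigr => y _ do rewrite E.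
rewrite -mulr_sumr. rewrite /M /Bexp. by rewrite -mulr_sumr.
Qed.

Lemma WpiS m s : Wpi H P r beta pi m.+1 s =
  Bexp P r beta (H - m) s (pi (H - m)%N s) (Wpi H P r beta pi m).
Proof. by []. Qed.

Lemma OpT_Wpi n : (n <= H)%N -> OpT P r beta pi n (Wpi H P r beta pi (H - n)) = Wpi H P r beta pi H.
Proof.
elim: n => [|n IH] nH; first by rewrite subn0.
rewrite /= -(IH (ltnW nH)). congr OpT.
have e : (H - n = (H - n.+1).+1)%N by rewrite subnSK.
have e2 : (H - (H - n.+1) = n.+1)%N by rewrite subKn.
rewrite e; apply: funext => s. rewrite /M WpiS. by rewrite e2.
Qed.

End Path2.


Section Gap.
Variables (R : realType) (S A : finType) (s1 : S) (a0 : A) (H : nat).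
Variables (P : nat -> S -> A -> S -> R) (r : nat -> S -> A -> R) (beta : R).
Hypothesis hP0 : forall h s a s', (1 <= h <= H)%N -> 0 <= P h s a s'.
Hypothesis hP1 : forall h s a, (1 <= h <= H)%N -> \sum_(s' : S) P h s a s' = 1.
Hypothesis hr : forall h s a, (1 <= h <= H)%N -> 0 <= r h s a <= 1.
Hypothesis hb : beta != 0.

Notation stx x := (pathst (ext s1 x)).

Definition Ygap (pi : policy S A) (st : nat -> S) : R :=
  \sum_(1 <= h < H.+1) cgap H P r beta h (st h) (pi h (st h)) (cr r pi st h).

Definition b0 : R := (expR (`|beta| * H%:R) - 1) / `|beta|.

Lemma cr_bnd pi st h : (h <= H.+1)%N -> 0 <= cr r pi st h <= (h.-1)%:R.
Proof.
move=> hH; rewrite /cr /cumrew /=; apply/andP; split.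
  rewrite big_nat_cond; apply: sumr_ge0 => j /andP[/andP[j1 jh] _].
  have hj : (1 <= j <= H)%N by rewrite j1 -ltnS (leq_trans jh).
  by case/andP: (hr (st j) (pi j (st j)) hj).
have -> : (h.-1)%:R = \sum_(1 <= j < h) (1 : R).
  by rewrite sumr_const_nat subn1.
rewrite big_nat_cond [X in _ <= X]big_nat_cond; apply: ler_sum => j /andP[/andP[j1 jh] _].
have hj : (1 <= j <= H)%N by rewrite j1 -ltnS (leq_trans jh).
by case/andP: (hr (st j) (pi j (st j)) hj).
Qed.

Lemma cgap_bnd h s a Rp : (1 <= h <= H)%N -> 0 <= Rp <= (h.-1)%:R ->
  0 <= cgap H P r beta h s a Rp <= b0.
Proof.
move=> hh /andP[R0 RH].
have hH : (h <= H)%N by case/andP: hh.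
have h1 : (1 <= h)%N by case/andP: hh.
have -> : cgap H P r beta h s a Rp =
  psi_beta H beta * (expR (beta * (Rp + Vstar H P r beta h s)) - expR (beta * (Rp + Qstar H P r beta h s a))).
  by rewrite /cgap -mulrA mulrBr -!expRD !mulrDr.
have QV := Vstar_ge_Qstar a0 r hP0 hP1 hb s a hh.
have Vb : 0 <= Vstar H P r beta h s <= (H.+1 - h)%:R.
  rewrite (Vstar_opt a0 r hP0 hP1 hb); last by rewrite h1 (leq_trans hH).
  by apply: (Vopt_bnd a0 hP0 hP1 hr hb); rewrite leq_subLR -addn1 addnC leq_add2r.
have Qb : 0 <= Qstar H P r beta h s a <= (H.+1 - h)%:R.
  rewrite (Qstar_opt a0 r hP0 hP1 hb) // subSn //; apply: (step_bnd hP0 hP1 hr hb) => // s'.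
  by apply: (Vopt_bnd a0 hP0 hP1 hr hb); rewrite leq_subr.
have e : ((h.-1)%:R + (H.+1 - h)%:R = H%:R :> R).
  by rewrite -natrD; congr _%:R; rewrite -subn1 addnBA ?subnKC //; lia.
apply/andP; split.
  by apply: psi_nonneg => //; rewrite lerD2l.
apply: psi_bnd => //; apply/andP; split; lra.
Qed.

Lemma Ygap_bnd pi st : 0 <= Ygap pi st <= b0 * H%:R.
Proof.
apply/andP; split.
  rewrite /Ygap big_nat_cond; apply: sumr_ge0 => h /andP[/andP[h1 hH] _].
  have hh : (1 <= h <= H)%N by rewrite h1 -ltnS.
  by case/andP: (cgap_bnd (st h) (pi h (st h)) hh (cr_bnd pi st (ltnW hH))).
have -> : b0 * H%:R = \sum_(1 <= h < H.+1) b0.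
  by rewrite sumr_const_nat subn1 /= mulr_natr.
rewrite /Ygap big_nat_cond [X in _ <= X]big_nat_cond.
apply: ler_sum => h /andP[/andP[h1 hH] _].
have hh : (1 <= h <= H)%N by rewrite h1 -ltnS.
by case/andP: (cgap_bnd (st h) (pi h (st h)) hh (cr_bnd pi st (ltnW hH))).
Qed.

End Gap.


Section Gap2.
Variables (R : realType) (S A : finType) (s1 : S) (a0 : A) (H : nat).
Variables (P : nat -> S -> A -> S -> R) (r : nat -> S -> A -> R) (beta : R).
Hypothesis hP0 : forall h s a s', (1 <= h <= H)%N -> 0 <= P h s a s'.
Hypothesis hP1 : forall h s a, (1 <= h <= H)%N -> \sum_(s' : S) P h s a s' = 1.
Hypothesis hr : forall h s a, (1 <= h <= H)%N -> 0 <= r h s a <= 1.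
Hypothesis hb : beta != 0.

Notation stx x := (pathst (ext s1 x)).

Lemma E_Ygap (pi : policy S A) :
  \sum_(x : {ffun 'I_H -> S}) pw s1 P pi H (stx x) * Ygap H P r beta pi (stx x)
  = psi_beta H beta * (expR (beta * Vstar H P r beta 1 s1) - expR (beta * Vpi H P r beta pi 1 s1)).
Proof.
pose W := fun j s => expR (beta * Vstar H P r beta j s).
pose u := fun j => OpT P r beta pi j (W j.+1) s1.
have Q : forall h s, (1 <= h <= H)%N ->
    expR (beta * Qstar H P r beta h s (pi h s)) = M P r beta pi h (W h.+1) s.
  move=> h s hh; rewrite /Qstar expinvln // /M /W.
  by rewrite (Bexp_exp r hP0 hP1 hb) // expR_gt0.
have T : forall h, (1 <= h <= H)%N ->
    \sum_(x : {ffun 'I_H -> S}) pw s1 P pi H (stx x) *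
       cgap H P r beta h (stx x h) (pi h (stx x h)) (cr r pi (stx x) h)
    = psi_beta H beta * (u h.-1 - u h).
  move=> h hh.
  have e : forall x : {ffun 'I_H -> S}, pw s1 P pi H (stx x) *
       cgap H P r beta h (stx x h) (pi h (stx x h)) (cr r pi (stx x) h)
     = psi_beta H beta * (pw s1 P pi H (stx x) * expR (beta * cr r pi (stx x) h) * W h (stx x h)
        - pw s1 P pi H (stx x) * expR (beta * cr r pi (stx x) h) * M P r beta pi h (W h.+1) (stx x h)).
    by move=> x; rewrite /cgap Q // /W; ring.
  rewrite (eq_bigr _ (fun x _ => e x)) -mulr_sumr sumrB.
  rewrite !(path_claim s1 r beta hP1 pi (leqnn H)) //.
  clear e; case: h hh => [|h] hh //=.
rewrite /Ygap.
under eq_bigr => x _ do rewrite mulr_sumr.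
rewrite exchange_big /= big_nat_cond.
rewrite (eq_bigr (fun h => psi_beta H beta * (u h.-1 - u h))); last first.
  by move=> h /andP[/andP[h1 hH] _]; apply: T; rewrite h1 -ltnS.
rewrite -big_nat_cond -mulr_sumr big_add1 /=.
have -> : \sum_(0 <= j < H) (u j - u j.+1) = u 0%N - u H.
  rewrite (eq_bigr (fun j => - (u j.+1 - u j))); last by move=> j _; rewrite opprB.
  by rewrite sumrN telescope_sumr // opprB.
congr (_ * (_ - _)); rewrite /u.
have -> : W H.+1 = Wpi H P r beta pi (H - H).
  apply: funext => s; rewrite subnn /W (Vstar_opt a0 r hP0 hP1 hb) ?subnn //=.
  by rewrite mulr0 expR0.
rewrite OpT_Wpi // /Vpi subSS subn0 expinvln //.
by rewrite (Wpi_X r hP0 hP1 hb) // expR_gt0.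
Qed.

End Gap2.


Section Num.
Variable R : realType.

Lemma e_lt3 : expR (1 : R) < 3.
Proof.
have h1 : expR (1 / 6 : R) <= 6 / 5.
  have e := expR_ge1Dx (- (1 / 6) : R).
  have p : (0 : R) < expR (- (1 / 6)) := expR_gt0 _.
  rewrite expRN in e p.
  have q : (0 : R) < expR (1 / 6) by rewrite expR_gt0.
  have : 5 / 6 * expR (1/6 : R) <= 1.
    by have := ler_wpM2r (ltW q) e; rewrite mulVf ?gt_eqF //; lra.
  lra.
have -> : (1 : R) = 6%:R * (1 / 6) by rewrite mul1r mulfV.
rewrite expRM_natl.
apply: (le_lt_trans (y := (6 / 5 : R) ^+ 6)).
  by rewrite lerXn2r // ?nnegrE ?ltW ?expR_gt0 //.
by rewrite !exprS expr0; lra.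
Qed.

Lemma ln3_gt1 : 1 < ln (3 : R).
Proof.
rewrite -[X in X < _](expRK 1) ltr_ln ?posrE ?expR_gt0 //.
exact: e_lt3.
Qed.

Lemma expmz (z : R) : 0 <= z <= 1 -> expR (- z) <= 1 - z / 2.
Proof.
case/andP=> z0 z1.
have e := expR_ge1Dx z.
have q : 0 < expR z := expR_gt0 _.
rewrite expRN -[_^-1]mul1r ler_pdivrMr //.
have : (1 + z) * (1 - z / 2) <= expR z * (1 - z / 2).
  by rewrite ler_wpM2r //; lra.
nra.
Qed.

Lemma expa (a : R) : expR a * (1 - a) <= 1.
Proof.
have e := expR_ge1Dx (- a).
have q : 0 < expR a := expR_gt0 _.
have h : 1 - a <= expR (- a) by lra.
have := ler_wpM2l (ltW q) h.
by rewrite -expRD subrr expR0.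
Qed.

Lemma divB (Y B : R) : 0 <= Y <= B -> B * (Y / B) = Y /\ 0 <= Y / B <= 1.
Proof.
case/andP=> Y0 YB; have [B0|Bp] := eqVneq B 0.
  have -> : Y = 0 by subst B; apply/le_anti; rewrite Y0 YB.
  by subst B; rewrite !mul0r lexx ler01.
have Bg : 0 < B by rewrite lt_neqAle eq_sym Bp (le_trans Y0 YB).
split; first by rewrite mulrC mulfVK.
apply/andP; split; first exact: divr_ge0 Y0 (ltW Bg).
by rewrite ler_pdivrMr // mul1r.
Qed.

End Num.


Section Final.
Variables (R : realType) (S A : finType) (s1 : S) (a0 : A) (H K : nat).
Variables (P : nat -> S -> A -> S -> R) (r : nat -> S -> A -> R) (beta : R).
Hypothesis hP0 : forall h s a s', (1 <= h <= H)%N -> 0 <= P h s a s'.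
Hypothesis hP1 : forall h s a, (1 <= h <= H)%N -> \sum_(s' : S) P h s a s' = 1.
Hypothesis hr : forall h s a, (1 <= h <= H)%N -> 0 <= r h s a <= 1.
Hypothesis hb : beta != 0.
Variable alg : Alg S A.

Notation T := {ffun 'I_H -> S}.
Notation stx x := (pathst (ext s1 x)).

Definition dpath : T := [ffun _ => s1].
Definition stf (g : nat -> T) (k : nat) : nat -> S := pathst (ext s1 (g k)).

Fixpoint histS (st : nat -> nat -> S) (k : nat) : seq (traj S A) :=
  match k with
  | 0 => [::]
  | k'.+1 => rcons (histS st k') (mktraj (alg (histS st k')) (st k'))
  end.

Definition pol (g : nat -> T) k := alg (histS (stf g) k).
Definition BB : R := b0 H beta * H%:R.
Definition EY (pi : policy S A) : R :=
  \sum_(x : T) pw s1 P pi H (stx x) * Ygap H P r beta pi (stx x).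
Definition mu g k := EY (pol g k) / BB.
Definition Zk g k := Ygap H P r beta (pol g k) (stf g k) / BB.
Definition Fk k g := pw s1 P (pol g k) H (stf g k) * expR (mu g k / 2 - Zk g k).
Definition Fw k g := pw s1 P (pol g k) H (stf g k).

Lemma hist_eq (w : Omega S H K) k : hist s1 alg w k = histS (stateAt s1 w) k.
Proof. by elim: k => //= k ->. Qed.

Lemma stateAt_eq (w : Omega S H K) : stateAt s1 w = stf (ext dpath w).
Proof.
apply: funext => k; apply: funext => h; rewrite /stateAt /stf /pathst /ext.
by case: (insub k) => [i|]; case: (insub h.-1) => [j|] //; rewrite ffunE.
Qed.

Lemma histS_loc st st' k : (forall j, (j < k)%N -> st j = st' j) -> histS st k = histS st' k.
Proof.
elim: k => //= k IH E; rewrite IH ?E // => j jk; apply: E; exact: ltnW.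
Qed.

Lemma pol_loc g g' k : (forall j, (j < k)%N -> g j = g' j) -> pol g k = pol g' k.
Proof.
by move=> E; rewrite /pol (@histS_loc _ (stf g')) // => j jk; rewrite /stf E.
Qed.

Lemma polk_eq (w : Omega S H K) k : polk s1 alg w k = pol (ext dpath w) k.
Proof. by rewrite /polk hist_eq stateAt_eq. Qed.

Lemma weight_eq (w : Omega S H K) : weight s1 P alg w = \prod_(k < K) Fw k (ext dpath w).
Proof.
rewrite /weight; apply: eq_bigr => k _.
by rewrite /Fw /pw -polk_eq -stateAt_eq.
Qed.

Lemma pol_upd g k y : pol (upd g k y) k = pol g k.
Proof. by apply: pol_loc => j jk; rewrite /upd ltn_eqF. Qed.

Lemma stf_upd g k y : stf (upd g k y) k = stx y.
Proof. by rewrite /stf /upd eqxx. Qed.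

Lemma Fw_loc k g g' : (forall j, (j <= k)%N -> g j = g' j) -> Fw k g = Fw k g'.
Proof.
move=> E; have ep : pol g k = pol g' k by apply: pol_loc => j jk; apply: E; exact: ltnW.
by rewrite /Fw ep /stf E.
Qed.

Lemma mass : \sum_(w : Omega S H K) weight s1 P alg w = 1.
Proof.
under eq_bigr => w _ do rewrite weight_eq.
apply: (kernel_eq dpath (F := Fw)); first exact: Fw_loc.
move=> k g; under eq_bigr => y _ do rewrite /Fw pol_upd stf_upd.
exact: (path_mass s1 hP1 _ (leqnn H)).
Qed.

Lemma BB_ge0 : 0 <= BB.
Proof.
by rewrite /BB /b0 mulr_ge0 // divr_ge0 // subr_ge0 expR_ge1' // mulr_ge0.
Qed.

Lemma EY_bnd pi : 0 <= EY pi <= BB.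
Proof.
apply/andP; split.
  apply: sumr_ge0 => x _; apply: mulr_ge0; first exact: (pw_ge0 s1 hP0 _ _ (leqnn H)).
  by case/andP: (Ygap_bnd a0 hP0 hP1 hr hb pi (stx x)).
rewrite /EY -[X in _ <= X]mul1r -(path_mass s1 hP1 pi (leqnn H)) mulr_suml.
apply: ler_sum => x _; apply: ler_wpM2l; first exact: (pw_ge0 s1 hP0 _ _ (leqnn H)).
by case/andP: (Ygap_bnd a0 hP0 hP1 hr hb pi (stx x)).
Qed.

Lemma mu_bnd g k : BB * mu g k = EY (pol g k) /\ 0 <= mu g k <= 1.
Proof. exact: (divB (EY_bnd _)). Qed.

Lemma Z_bnd pi st : BB * (Ygap H P r beta pi st / BB) = Ygap H P r beta pi st /\
  0 <= Ygap H P r beta pi st / BB <= 1.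
Proof. exact: (divB (Ygap_bnd a0 hP0 hP1 hr hb pi st)). Qed.

Lemma Fk_loc k g g' : (forall j, (j <= k)%N -> g j = g' j) -> Fk k g = Fk k g'.
Proof.
move=> E; have ep : pol g k = pol g' k by apply: pol_loc => j jk; apply: E; exact: ltnW.
by rewrite /Fk /mu /Zk ep /stf E.
Qed.

Lemma Fk_sum k g : \sum_(y : T) Fk k (upd g k y) <= 1.
Proof.
under eq_bigr => y _ do rewrite /Fk /mu /Zk pol_upd stf_upd.
set pi := pol g k; set m := EY pi / BB.
have [_ /andP[m0 m1]] := mu_bnd g k.
rewrite -/pi -/m in m0 m1.
have E : forall y : T, pw s1 P pi H (stx y) * expR (m / 2 - Ygap H P r beta pi (stx y) / BB)
   <= expR (m / 2) * (pw s1 P pi H (stx y) - pw s1 P pi H (stx y) * (Ygap H P r beta pi (stx y) / BB) / 2).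
  move=> y; rewrite expRD mulrCA; apply: ler_wpM2l; first exact: ltW (expR_gt0 _).
  have [_ zb] := Z_bnd pi (stx y).
  have := expmz zb; have := pw_ge0 s1 hP0 pi (stx y) (leqnn H) => p0 e.
  apply: le_trans (ler_wpM2l p0 e) _.
  by rewrite mulrBr mulr1 !mulrA lexx.
apply: le_trans (ler_sum _ (fun y _ => E y)) _.
rewrite -mulr_sumr sumrB -mulr_suml (path_mass s1 hP1 pi (leqnn H)).
have -> : \sum_(y : T) pw s1 P pi H (stx y) * (Ygap H P r beta pi (stx y) / BB) = m.
  by rewrite /m /EY mulr_suml; apply: eq_bigr => y _; rewrite mulrA.
have := expa (m / 2); lra.
Qed.

Lemma Fk_ge0 k g : 0 <= Fk k g.
Proof. by apply: mulr_ge0; [exact: (pw_ge0 s1 hP0 _ _ (leqnn H)) | exact: ltW (expR_gt0 _)]. Qed.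

Lemma supermart :
  \sum_(w : Omega S H K) weight s1 P alg w *
     expR (\sum_(k < K) (mu (ext dpath w) k / 2 - Zk (ext dpath w) k)) <= 1.
Proof.
apply: le_trans (kernel_le dpath Fk_ge0 Fk_loc Fk_sum K); rewrite le_eqVlt; apply/orP; left.
apply/eqP; apply: eq_bigr => w _.
rewrite weight_eq expR_sum -big_split /=.
by apply: eq_bigr => k _; rewrite /Fk.
Qed.

Lemma reg_le pi : Vstar H P r beta 1 s1 - Vpi H P r beta pi 1 s1 <= EY pi.
Proof.
rewrite /EY (E_Ygap s1 a0 r hP0 hP1 hb).
rewrite (Vstar_opt a0 r hP0 hP1 hb) // (Vpi_X r hP0 hP1 hb) // subSS subn0.
apply: psi_conv => //.
- by case/andP: (X_bnd hP0 hP1 hr hb pi s1 (leqnn H)).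
- exact: X_le_Vopt.
- by case/andP: (Vopt_bnd a0 hP0 hP1 hr hb s1 (leqnn H)).
Qed.

Lemma gapsum_eq (w : Omega S H K) :
  gapsum s1 P r beta alg w = \sum_(k < K) BB * Zk (ext dpath w) k.
Proof.
apply: eq_bigr => k _; rewrite /Zk.
have [-> _] := Z_bnd (pol (ext dpath w) k) (stf (ext dpath w) k).
by rewrite /Ygap -polk_eq -stateAt_eq.
Qed.

Lemma regret_le (w : Omega S H K) :
  regret s1 P r beta alg w <= \sum_(k < K) BB * mu (ext dpath w) k.
Proof.
apply: ler_sum => k _; have [-> _] := mu_bnd (ext dpath w) k.
by rewrite -polk_eq reg_le.
Qed.

End Final.


Section Main.
Variables (R : realType) (S A : finType) (s1 : S) (a0 : A) (H K : nat).
Variables (P : nat -> S -> A -> S -> R) (r : nat -> S -> A -> R) (beta delta : R).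
Hypothesis hP0 : forall h s a s', (1 <= h <= H)%N -> 0 <= P h s a s'.
Hypothesis hP1 : forall h s a, (1 <= h <= H)%N -> \sum_(s' : S) P h s a s' = 1.
Hypothesis hr : forall h s a, (1 <= h <= H)%N -> 0 <= r h s a <= 1.
Hypothesis hb : beta != 0.
Hypothesis hd : 0 < delta <= 1.
Hypothesis hK : (3 <= K)%N.
Variable alg : Alg S A.

Definition Cst : R := 2 * (1 + ln 2 / ln (ln 3)).

Lemma lnln3_gt0 : 0 < ln (ln (3 : R)).
Proof. by apply: ln_gt0; exact: ln3_gt1. Qed.

Lemma log_cmp : 2 * ln (2 / delta) <= Cst * ln (ln K%:R / delta).
Proof.
case/andP: hd => d0 d1.
have l0 := lnln3_gt0.
have l3 : 1 < ln (3 : R) := ln3_gt1 R.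
have K3 : (3 : R) <= K%:R by rewrite (ler_nat R 3 K).
have lK : ln (3 : R) <= ln K%:R.
  by rewrite ler_ln ?posrE //; lra.
have a_ge : ln (ln (3 : R)) <= ln (ln K%:R) by rewrite ler_ln ?posrE //; lra.
have t0 : ln delta <= 0 by apply: ln_le0.
have l2 : 0 < ln (2 : R) by apply: ln_gt0; lra.
have lK0 : 0 < ln (K%:R : R) by apply: ln_gt0; lra.
rewrite ln_div ?posrE //.
have l2d : ln (2 / delta) = ln 2 - ln delta by rewrite ln_div ?posrE //; lra.
rewrite l2d.
set q := ln 2 / ln (ln (3 : R)).
have qe : q * ln (ln (3 : R)) = ln 2 by rewrite /q mulfVK // gt_eqF.
have q0 : 0 <= q by rewrite /q divr_ge0 // ltW.
have qa : q * ln (ln (3 : R)) <= q * ln (ln K%:R) by rewrite ler_wpM2l.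
have qt : 0 <= q * (- ln delta) by rewrite mulr_ge0 // oppr_ge0.
have e : Cst * (ln (ln K%:R) - ln delta) =
   2 * (ln (ln K%:R) - ln delta) + 2 * (q * ln (ln K%:R)) - 2 * (q * ln delta).
  by rewrite /Cst -/q; ring.
rewrite e; rewrite mulrN in qt.
have h1 : ln 2 <= q * ln (ln (K%:R : R)) by rewrite -qe.
have a0' : 0 <= ln (ln (K%:R : R)) by apply: le_trans a_ge; exact: ltW.
lra.
Qed.

Lemma Cst_ge2 : 2 <= Cst.
Proof.
have l0 := lnln3_gt0.
have l2 : 0 < ln (2 : R) by apply: ln_gt0; lra.
have : 0 <= ln 2 / ln (ln (3 : R)) by rewrite divr_ge0 // ltW.
rewrite /Cst; lra.
Qed.

Definition Sg (w : Omega S H K) : R :=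
  \sum_(k < K) (mu s1 P r beta alg (ext (dpath s1 H) w) k / 2 -
                Zk s1 P r beta alg (ext (dpath s1 H) w) k).

Lemma weight_ge0 (w : Omega S H K) : 0 <= weight s1 P alg w.
Proof.
rewrite weight_eq; apply: prodr_ge0 => k _.
exact: (pw_ge0 s1 hP0 _ _ (leqnn H)).
Qed.

Lemma prob_ge (E : pred (Omega S H K)) :
  (forall w, ~~ E w -> 2 / delta < expR (Sg w)) ->
  1 - delta / 2 <= \sum_(w | E w) weight s1 P alg w.
Proof.
move=> HE; case/andP: hd => d0 d1.
have sm := supermart s1 a0 K hP0 hP1 hr hb alg.
have tot := mass s1 K hP1 alg.
rewrite (bigID E) /= in tot.
have h : \sum_(w | ~~ E w) weight s1 P alg w * (2 / delta) <= 1.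
  apply: le_trans sm.
  apply: (@le_trans _ _ (\sum_(w | ~~ E w) weight s1 P alg w * expR (Sg w))).
    apply: ler_sum => w hw; apply: ler_wpM2l; first exact: weight_ge0.
    exact: ltW (HE w hw).
  rewrite [X in _ <= X](bigID E) /= /Sg lerDr.
  apply: sumr_ge0 => w _; apply: mulr_ge0; first exact: weight_ge0.
  exact: ltW (expR_gt0 _).
rewrite -mulr_suml in h.
have e : 2 / delta * (delta / 2) = 1.
  by field; rewrite (gt_eqF d0).
have d2 : 0 <= delta / 2 by rewrite divr_ge0 // ltW.
have := ler_wpM2r d2 h; rewrite -mulrA e mulr1 mul1r.
lra.
Qed.

Lemma main_bound : bound_whp s1 H K P r beta delta alg Cst.
Proof.
case/andP: hd => d0 d1.
rewrite /bound_whp /prob; apply: prob_ge => w /=.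
set L := ln (ln K%:R / delta).
have eB : (expR (`|beta| * H%:R) - 1) / `|beta| * H%:R = BB H beta by [].
rewrite eB; apply: contraR; rewrite -leNgt => hS.
have {}hS : Sg w <= ln (2 / delta).
  by rewrite -(expRK (Sg w)) ler_ln ?posrE ?expR_gt0 // divr_gt0.
have BB0 := BB_ge0 H beta.
have Zs0 : 0 <= \sum_(k < K) Zk s1 P r beta alg (ext (dpath s1 H) w) k.
  apply: sumr_ge0 => k _; rewrite /Zk.
  by case: (Z_bnd a0 hP0 hP1 hr hb (pol s1 alg (ext (dpath s1 H) w) k)
    (stf s1 (ext (dpath s1 H) w) k)) => _ /andP[].
rewrite /Sg sumrB -mulr_suml in hS.
have lc := log_cmp.
have c2 := Cst_ge2.
have h2 := ler_wpM2r Zs0 c2.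
have hm : \sum_(k < K) mu s1 P r beta alg (ext (dpath s1 H) w) k <=
   Cst * \sum_(k < K) Zk s1 P r beta alg (ext (dpath s1 H) w) k + Cst * L.
  rewrite -/L in lc; lra.
apply: le_trans (regret_le s1 a0 hP0 hP1 hr hb alg w) _.
rewrite gapsum_eq // -!mulr_sumr.
apply: le_trans (ler_wpM2l BB0 hm) _.
by rewrite le_eqVlt; apply/orP; left; apply/eqP; ring.
Qed.

End Main.


Unset Implicit Arguments.

Theorem lemma1 (R : realType) :
  exists c C : R, 0 < c /\ 0 < C /\
  forall (S A : finType) (s1 : S) (a0 : A) (H K : nat)
         (P : nat -> S -> A -> S -> R) (r : nat -> S -> A -> R) (beta delta : R),
    (forall h s a s', (1 <= h <= H)%N -> 0 <= P h s a s') ->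
    (forall h s a, (1 <= h <= H)%N -> \sum_(s' : S) P h s a s' = 1) ->
    (forall h s a, (1 <= h <= H)%N -> 0 <= r h s a <= 1) ->
    beta != 0 ->
    0 < delta <= 1 ->
    (3 <= K)%N ->
    bound_whp s1 H K P r beta delta (RSVI2 a0 H K r beta delta c) C /\
    bound_whp s1 H K P r beta delta (RSQ2 a0 H K r beta delta c) C.
Proof.
exists 1, (Cst R); split; first exact: ltr01.
split; first by have := Cst_ge2 R; lra.
move=> S A s1 a0 H K P r beta delta hP0 hP1 hr hb hd hK.
by split; apply: (main_bound s1 a0 hP0 hP1 hr hb hd hK).
Qed.
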